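(* Let $P$ be an $r$-differential poset with rank sizes $p_n$. Suppose that (a) for every $n\ge1$ and every $1\le j\le n$ one has $\Delta p_n\ge \Delta p_{n-j-\delta_{r,1}}$, and (b) for every $n\ge 0$ the matrix $DU_n+tI\in\mathbb{Z}[t]^{p_n\times p_n}$ has a Smith form over $\mathbb{Z}[t]$. Then for every $n\ge0$ the cokernel of $U_n:\mathbb{Z}^{p_n}\to\mathbb{Z}^{p_{n+1}}$ is a free abelian group (equivalently, the Smith form of $U_n$ over $\mathbb{Z}$ has only zeroes and ones on its diagonal).
   Context: For a positive integer $r$, an $r$-differential poset is a graded poset with a minimum element, all of whose intervals and rank sets are finite, such that (D1) if an element covers exactly $m$ elements then it is covered by exactly $m+r$ elements, and (D2) if two distinct elements have exactly $m$ elements that they both cover, then exactly $m$ elements cover them both. $P_n$ is the set of elements of rank $n$, $p_n:=|P_n|$, $p_k:=0$ for $k<0$, $\Delta p_n:=p_n-p_{n-1}$, and $\delta_{r,1}$ is the Kronecker delta. The up map $U_n:\mathbb{Z}^{P_n}\to\mathbb{Z}^{P_{n+1}}$ sends each basis element $x$ to the sum of the elements covering $x$; the down map $D_n:\mathbb{Z}^{P_n}\to\mathbb{Z}^{P_{n-1}}$ sends $x$ to the sum of the elements covered by $x$; $DU_n:=D_{n+1}U_n$ as a $p_n\times p_n$ integer matrix. A matrix over a commutative ring $S$ is in Smith form if it is diagonal with diagonal entries $s_1,s_2,\dots$ satisfying $s_i\mid s_{i+1}$; it has a Smith form over $S$ if it becomes one after multiplication on the left and right by invertible matrices over $S$. 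*)

(* Defs.v *)
From HB Require Import structures.
From mathcomp Require Import all_boot all_order all_algebra.
Set Implicit Arguments. Unset Strict Implicit. Unset Printing Implicit Defensive.
Import Order.TTheory GRing.Theory Num.Theory.
Local Open Scope ring_scope.

(* A graded poset with minimum and finite ranks is encoded by its rank sizes
   p : nat -> nat (P_n = 'I_(p n)) and its Hasse diagram
   cov n x y  <=>  y in P_(n+1) covers x in P_n. *)
Definition cover_rel (p : nat -> nat) := forall n : nat, 'I_(p n) -> 'I_(p n.+1) -> bool.

Definition ndown (p : nat -> nat) (cov : cover_rel p) (n : nat) : 'I_(p n) -> nat :=
  match n as m return 'I_(p m) -> nat with
  | 0 => fun _ => 0%N
  | m.+1 => fun x => #|[pred z : 'I_(p m) | cov m z x]|
  end.

Definition nup (p : nat -> nat) (cov : cover_rel p) (n : nat) (x : 'I_(p n)) : nat :=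
  #|[pred y : 'I_(p n.+1) | cov n x y]|.

Definition ncommon_down (p : nat -> nat) (cov : cover_rel p) (n : nat)
  : 'I_(p n) -> 'I_(p n) -> nat :=
  match n as m return 'I_(p m) -> 'I_(p m) -> nat with
  | 0 => fun _ _ => 0%N
  | m.+1 => fun x x' => #|[pred z : 'I_(p m) | cov m z x && cov m z x']|
  end.

Definition ncommon_up (p : nat -> nat) (cov : cover_rel p) (n : nat)
  (x x' : 'I_(p n)) : nat :=
  #|[pred y : 'I_(p n.+1) | cov n x y && cov n x' y]|.

Definition is_differential_poset (r : nat) (p : nat -> nat) (cov : cover_rel p) : Prop :=
  [/\ (0 < r)%N,
      p 0%N = 1%N,                                   (* unique minimum 0^ of rank 0 *)
      (forall n (y : 'I_(p n.+1)), exists x, cov n x y),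
      (forall n (x : 'I_(p n)), nup cov x = (ndown cov x + r)%N)
    & (forall n (x x' : 'I_(p n)), x != x' -> ncommon_down cov x x' = ncommon_up cov x x')
  ].

(* up map U_n : Z^{P_n} -> Z^{P_{n+1}}, as a p_{n+1} x p_n matrix acting on columns *)
Definition Umx (p : nat -> nat) (cov : cover_rel p) (n : nat) : 'M[int]_(p n.+1, p n) :=
  \matrix_(i, j) (cov n j i)%:R.

Definition Dmx (p : nat -> nat) (cov : cover_rel p) (n : nat) : 'M[int]_(p n, p n.+1) :=
  \matrix_(i, j) (cov n i j)%:R.

Definition DUmx (p : nat -> nat) (cov : cover_rel p) (n : nat) : 'M[int]_(p n) :=
  Dmx cov n *m Umx cov n.

(* p_k as an integer, with p_k = 0 for k < 0 *)
Definition pz (p : nat -> nat) (k : int) : int :=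
  match k with Posz m => (p m)%:Z | Negz _ => 0 end.

Definition Delta_p (p : nat -> nat) (k : int) : int := pz p k - pz p (k - 1).

(* genuine divisibility in a commutative ring *)
Definition rdvd (R : comPzRingType) (a b : R) : Prop := exists c : R, b = c * a.

Definition is_smith_form (R : comPzRingType) (m n : nat) (M : 'M[R]_(m, n)) : Prop :=
  (forall (i : 'I_m) (j : 'I_n), (i : nat) != j -> M i j = 0) /\
  (forall (i i' : 'I_m) (j j' : 'I_n),
      (i : nat) = j -> (i' : nat) = j' -> (i : nat).+1 = i' -> rdvd (M i j) (M i' j')).

Definition has_smith_form (R : comUnitRingType) (m n : nat) (A : 'M[R]_(m, n)) : Prop :=
  exists (L : 'M[R]_m) (Rm : 'M[R]_n),
    L \in unitmx /\ Rm \in unitmx /\ is_smith_form (L *m A *m Rm).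

(* cokernel of A : Z^n -> Z^m is free abelian: there is a surjective
   homomorphism Z^m -> Z^k whose kernel is exactly the image of A,
   i.e. Z^m / im A is isomorphic to Z^k. *)
Definition coker_free (m n : nat) (A : 'M[int]_(m, n)) : Prop :=
  exists (k : nat) (F : 'M[int]_(k, m)),
    (forall w : 'cV[int]_k, exists v : 'cV[int]_m, F *m v = w) /\
    (forall v : 'cV[int]_m, F *m v = 0 <-> exists u : 'cV[int]_n, v = A *m u).

(* Main.v *)
Require Import Defs.
From mathcomp Require Import all_boot all_order all_algebra.
Import GRing.Theory Num.Theory.
Local Open Scope ring_scope.
From mathcomp Require Import all_field.
From mathcomp Require Import zify ring.
Set Implicit Arguments. Unset Strict Implicit. Unset Printing Implicit Defensive.
Import Order.TTheory GRing.Theory Num.Theory.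
Local Open Scope ring_scope.

Lemma sum_bool_card k (b1 b2 : 'I_k -> bool) :
  \sum_(j : 'I_k) ((b1 j)%:R * (b2 j)%:R : int) = (#|[pred j | b1 j && b2 j]|)%:R.
Proof.
rewrite -sum1_card natr_sum [RHS]big_mkcond; apply: eq_bigr => j _ /=.
by rewrite inE; case: (b1 j); case: (b2 j); rewrite ?mulr0 ?mul0r ?mulr1.
Qed.

Section A.
Variables (r : nat) (p : nat -> nat) (cov : cover_rel p).
Hypothesis hP : is_differential_poset r cov.

Lemma DU_entry n (i i' : 'I_(p n)) :
  DUmx cov n i i' = (ncommon_down cov i i' + (i == i') * r)%N%:R.
Proof.
case: hP => _ _ _ hD1 hD2.
rewrite /DUmx !mxE.
under eq_bigr do rewrite !mxE.
rewrite sum_bool_card.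
have [<-|ne] := eqVneq i i'.
  rewrite mul1n.
  have -> : #|[pred j | cov i j && cov i j]| = nup cov i.
    by apply: eq_card => j; rewrite !inE andbb.
  rewrite hD1; congr (_ + _)%N%:R.
  case: n i {i'} => [|n] i //=.
  by apply: eq_card => j; rewrite !inE andbb.
rewrite mul0n addn0 hD2 //.
Qed.

Lemma DU0 : DUmx cov 0 = r%:R%:M.
Proof.
apply/matrixP => i i'; rewrite DU_entry !mxE /=.
by case: (i == i'); rewrite /= ?mul1n ?mul0n.
Qed.

Lemma DUS n : DUmx cov n.+1 = Umx cov n *m Dmx cov n + r%:R%:M.
Proof.
apply/matrixP => i i'; rewrite DU_entry !mxE.
under eq_bigr do rewrite !mxE.
rewrite sum_bool_card natrD /=; congr (_ + _).
by case: (i == i'); rewrite /= ?mul1n ?mul0n.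
Qed.

Lemma DmxT n : Dmx cov n = (Umx cov n)^T.
Proof. by apply/matrixP => i j; rewrite !mxE. Qed.

End A.

Lemma sylvester_pow (R : comNzRingType) (N m : nat) (U : 'M[R]_(N, m)) (D : 'M[R]_(m, N)) (u : R) :
  u ^+ N * \det (D *m U + u%:M) = u ^+ m * \det (U *m D + u%:M).
Proof.
pose X := block_mx (u%:M : 'M_N) (- U) (u *: D) (u%:M : 'M_m).
have e1 : X = block_mx 1%:M 0 D 1%:M *m block_mx 1%:M (- U) 0 (D *m U + u%:M)
              *m block_mx (u%:M) 0 0 1%:M.
  rewrite !mulmx_block !mul1mx !mulmx1 !mul0mx !mulmx0 !add0r !addr0 !mul1mx.
  rewrite mulmxN addrA addNr add0r /X; congr block_mx.
  by rewrite mul_mx_scalar.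
have e2 : X = block_mx 1%:M 0 0 (u%:M) *m block_mx 1%:M (- U) 0 1%:M
              *m block_mx (U *m D + u%:M) 0 D 1%:M.
  rewrite !mulmx_block !mul1mx !mulmx1 !mul0mx !mulmx0 !add0r !addr0 !mul1mx.
  rewrite mul0mx add0r mulNmx addrC addrA addNr add0r /X; congr block_mx.
  by rewrite mul_scalar_mx.
have := congr1 determinant e1; rewrite e2 !det_mulmx.
rewrite !det_lblock !det_ublock !det1 !det_scalar !mul1r !mulr1 => E.
by rewrite mulrC -E mulrC.
Qed.

Section D.
Variables (r : nat) (p : nat -> nat) (cov : cover_rel p).
Hypothesis hP : is_differential_poset r cov.
Hypothesis mono : forall n, (p n <= p n.+1)%N.

Definition ex (m : nat) : nat := if m is m'.+1 then (p m'.+1 - p m')%N else 1%N.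

Lemma XaddC_neq0 (c : int) : ('X + c%:P : {poly int}) != 0.
Proof. by rewrite -size_poly_eq0 size_XaddC. Qed.

Lemma chi_formula n (c : int) :
  \det (map_mx polyC (DUmx cov n) + ('X + c%:P)%:M) =
  \prod_(k < n.+1) ('X + (c + (r * k.+1)%N%:R)%:P) ^+ ex (n - k).
Proof.
elim: n c => [|n IH] c.
  case: hP => _ p0 _ _ _.
  rewrite (DU0 hP) big_ord1 /= muln1 map_scalar_mx /= -raddfD /= det_scalar p0.
  by rewrite polyCD; ring.
rewrite (DUS hP n) raddfD /= map_mxM map_scalar_mx /= -addrA -raddfD /=.
rewrite addrCA -polyCD.
set u := 'X + _.
have hu : u != 0 by apply: XaddC_neq0.
have := sylvester_pow (map_mx polyC (Umx cov n)) (map_mx polyC (Dmx cov n)) u.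
rewrite -map_mxM -/(DUmx cov n).
have -> : u ^+ p n.+1 = u ^+ p n * u ^+ (p n.+1 - p n) by rewrite -exprD subnKC.
rewrite -mulrA => /mulfI; rewrite expf_neq0 // => /(_ isT) <-.
rewrite IH [RHS]big_ord_recl /=; congr (_ * _).
  by rewrite /u muln1 (addrC c).
apply eq_bigr => k _; rewrite /bump /= add1n subSS; congr (_ ^+ _).
congr (_ + _%:P); rewrite (addrC _ c) -addrA -natrD; congr (_ + _%:R); lia.
Qed.

End D.

Lemma pz_neg (p : nat -> nat) (z : int) : z < 0 -> pz p z = 0.
Proof. by case: z. Qed.

Lemma Delta_pos (p : nat -> nat) (m : nat) : Delta_p p m.+1 = (p m.+1)%:Z - (p m)%:Z.
Proof. by rewrite /Delta_p (_ : m.+1%:Z - 1 = m) // -addn1 PoszD addrK. Qed.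

Lemma Delta_0 (p : nat -> nat) : Delta_p p 0 = (p 0)%:Z.
Proof. by rewrite /Delta_p /= subr0. Qed.

Lemma Delta_neg (p : nat -> nat) (z : int) : z < 0 -> Delta_p p z = 0.
Proof.
move=> zn; rewrite /Delta_p !pz_neg ?subr0 //.
by apply: lt_trans zn; rewrite gtrDl.
Qed.

Section B.
Variables (r : nat) (p : nat -> nat) (cov : cover_rel p).
Hypothesis hP : is_differential_poset r cov.
Hypothesis ha : forall (n j : nat), (1 <= n)%N -> (1 <= j <= n)%N ->
     Delta_p p (n%:Z - j%:Z - (r == 1%N)%:Z) <= Delta_p p n%:Z.

Lemma mono_p n : (p n <= p n.+1)%N.
Proof.
have := ha (n := n.+1) (j := n.+1) isT; rewrite leqnn => /(_ isT).
rewrite subrr sub0r Delta_pos.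
have h0 : 0 <= Delta_p p (- (r == 1%N)%:Z).
  case: (r == 1%N) => /=; first by rewrite Delta_neg.
  by rewrite oppr0 Delta_0.
move=> h; have := le_trans h0 h; rewrite subr_ge0 lez_nat; done.
Qed.

Lemma ex_Delta m : (ex p m)%:Z = Delta_p p m.
Proof.
case: hP => _ p0 _ _ _.
case: m => [|m]; first by rewrite Delta_0 p0.
by rewrite Delta_pos subzn // mono_p.
Qed.

Lemma ex_le n k : (k <= n.+1)%N -> ~~ ((r == 1%N) && (k == 1%N)) ->
  (ex p (n.+1 - k) <= ex p n.+1)%N.
Proof.
move=> kn bad.
case: k kn bad => [|k] kn bad; first by rewrite subn0.
rewrite -lez_nat !ex_Delta.
have [r1|rn1] := eqVneq r 1%N.
  case: k kn bad => [|k] kn bad; first by rewrite r1 in bad.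
  have := ha (n := n.+1) (j := k.+1) isT.
  rewrite r1 eqxx /= => /(_ _); rewrite ltnW //= => /(_ isT).
  suff -> : (n.+1)%:Z - (k.+1)%:Z - 1 = (n.+1 - k.+2)%N%:Z by [].
  lia.
have := ha (n := n.+1) (j := k.+1) isT.
rewrite (negbTE rn1) /= subr0 kn => /(_ isT).
by rewrite subzn.
Qed.

End B.

Lemma mup_prod_pow (F : fieldType) (K : nat) (b : 'I_K -> F) (e : 'I_K -> nat) (z : F) :
  mup z (\prod_(i < K) ('X - (b i)%:P) ^+ e i) = (\sum_(i < K) (b i == z) * e i)%N.
Proof.
elim: K b e => [|K IH] b e.
  by rewrite !big_ord0 mupNroot // root1.
rewrite big_ord_recr /= mupM; last 2 first.
- by rewrite prodf_seq_neq0; apply/allP => i _; rewrite expf_neq0 // polyXsubC_eq0.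
- by rewrite expf_neq0 // polyXsubC_eq0.
rewrite IH big_ord_recr /= mup_XsubCX; congr (_ + _)%N.
by case: (b ord_max == z); rewrite ?mul1n ?mul0n.
Qed.

Lemma key_eval (K : nat) (a : 'I_K -> int) (e : 'I_K -> nat) (x0 : int) (D k : nat)
    (g q : {poly int}) :
  injective a ->
  (forall i, (D < e i)%N -> x0 + a i = 1) ->
  (D < k)%N ->
  g ^+ k * q = \prod_(i < K) ('X + (a i)%:P) ^+ e i ->
  g.[x0] = lead_coef g /\ lead_coef g \is a GRing.unit.
Proof.
move=> ainj good Dk E.
have lu : lead_coef g \is a GRing.unit.
  have mon : \prod_(i < K) ('X + (a i)%:P) ^+ e i \is monic.
    by apply: monic_prod => i _; apply: monic_exp; apply: monicXaddC.
  have := congr1 lead_coef E; rewrite lead_coefM lead_coef_exp (monicP mon).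
  move=> h; have : lead_coef g ^+ k \is a GRing.unit.
    by apply/unitrPr; exists (lead_coef q).
  by rewrite unitrX_pos // (leq_ltn_trans _ Dk).
split=> //.
pose f := (intr : int -> algC).
have finj : injective f by apply: intr_inj.
pose G := map_poly f g.
have EG : G ^+ k * map_poly f q = \prod_(i < K) ('X - (- f (a i))%:P) ^+ e i.
  rewrite -rmorphXn -rmorphM E rmorph_prod; apply: eq_bigr => i _.
  by rewrite rmorphXn /= map_polyXaddC polyCN opprK.
have gnz : g != 0 by apply: contraTneq lu => ->; rewrite lead_coef0 unitr0.
have Gnz : G != 0 by rewrite -lead_coef_eq0 lead_coef_map_inj // intr_eq0 lead_coef_eq0.
have pnz : \prod_(i < K) ('X + (a i)%:P) ^+ e i != 0.
  by rewrite prodf_seq_neq0; apply/allP => i _; rewrite expf_neq0 // -size_poly_eq0 size_XaddC.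
have qnz0 : q != 0 by apply/eqP => q0; move: pnz; rewrite -E q0 mulr0 eqxx.
have qnz : map_poly f q != 0 by rewrite -lead_coef_eq0 lead_coef_map_inj // intr_eq0 lead_coef_eq0.
have [s Es] := closed_field_poly_normal G.
have roots_good : forall z, z \in s -> f x0 - z = 1.
  move=> z zs.
  have rz : root G z by rewrite Es rootZ ?lead_coef_eq0 // root_prod_XsubC.
  have m1 : (0 < mup z G)%N by rewrite -XsubC_dvd // -root_factor_theorem.
  have := congr1 (mup z) EG; rewrite mupM ?expf_neq0 // mup_prod_pow.
  have mk : (k <= mup z (G ^+ k))%N.
    rewrite mup_geq ?expf_neq0 //; apply: dvdp_exp2r; rewrite dvdp_XsubCl //.
  move=> hsum.
  have big : (D < \sum_(i < K) (- f (a i) == z) * e i)%N.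
    by rewrite -hsum; apply: (leq_trans Dk); apply: (leq_trans mk); apply: leq_addr.
  have [i0 /eqP hi0 | none] := pickP (fun i => - f (a i) == z); last first.
    by move: big; rewrite big1 // => i _; rewrite none.
  rewrite (bigD1 i0) //= big1 ?addn0 in big; last first.
    move=> j nj; case: eqP => // hj; exfalso; move/negP: nj; apply.
    by apply/eqP; apply: ainj; apply: finj; apply: oppr_inj; rewrite hj hi0.
  rewrite hi0 eqxx mul1n in big.
  by rewrite -hi0 opprK -rmorphD /= good // rmorph1.
have HG : G.[f x0] = f (lead_coef g).
  rewrite {1}Es hornerZ horner_prod big1_seq ?mulr1 => [|z zs]; last first.
    by rewrite hornerXsubC roots_good.
  by rewrite /G lead_coef_map_inj.
by apply: finj; move: HG; rewrite /G /f horner_map.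
Qed.

Lemma rdvd_trans (R : comPzRingType) (a b c : R) : rdvd a b -> rdvd b c -> rdvd a c.
Proof. by move=> [x ->] [y ->]; exists (y * x); rewrite mulrA. Qed.

Lemma smith_chain (R : comPzRingType) N (S : 'M[R]_N) : is_smith_form S ->
  forall i j : 'I_N, (i <= j)%N -> rdvd (S i i) (S j j).
Proof.
move=> [_ hd] i j ij.
have [d hd'] : exists d, j = (i + d)%N :> nat by exists (j - i)%N; lia.
elim: d j ij hd' => [|d IH] j ij E.
  have -> : j = i by apply: val_inj; rewrite /= E addn0.
  by exists 1; rewrite mul1r.
have lt : (i + d < N)%N by have := ltn_ord j; lia.
apply: rdvd_trans (IH (Ordinal lt) _ erefl) _; first by rewrite /= leq_addr.
by apply: hd => //=; rewrite E addnS.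
Qed.

Lemma card_ge N (i : nat) : (i <= N)%N -> #|[pred j : 'I_N | ~~ (j < i)%N]| = (N - i)%N.
Proof.
move=> iN; rewrite -sum1_card (big_mkcond (fun j : 'I_N => j \in _)) /=.
rewrite -(big_mkord xpredT (fun j => if ~~ (j < i)%N then 1%N else 0%N)).
rewrite (big_cat_nat (n:=i)) //= big1_seq ?add0n; last first.
  by move=> j /=; rewrite mem_index_iota => /andP[_ ->].
rewrite (eq_big_nat _ _ (F2 := fun _ => 1%N)); last first.
  by move=> j /andP[h _]; rewrite -leqNgt h.
by rewrite sum_nat_const_nat muln1.
Qed.

Lemma smith_det (R : comPzRingType) N (S : 'M[R]_N) : is_smith_form S ->
  \det S = \prod_i S i i.
Proof.
move=> [hz _]; have E : S = diag_mx (\row_i S i i).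
  apply/matrixP => i j; rewrite !mxE; case: (eqVneq i j) => [->|ne].
    by rewrite mulr1n.
  by rewrite mulr0n hz.
by rewrite {1}E det_diag; apply: eq_bigr => i _; rewrite mxE.
Qed.

Lemma smith_split (R : comPzRingType) N (S : 'M[R]_N) (i : 'I_N) : is_smith_form S ->
  exists c, \prod_j S j j = (S i i) ^+ (N - i) * c.
Proof.
move=> hS.
rewrite (bigID (fun j : 'I_N => (j < i)%N)) /=.
have hc : forall j : 'I_N, exists c, ~~ (j < i)%N -> S j j = c * S i i.
  move=> j; case: (boolP (j < i)%N) => h; first by exists 0.
  have := @smith_chain _ _ S hS i j; rewrite leqNgt h => /(_ isT) [c hc'].
  by exists c.
have [f hf] := fin_all_exists hc.
rewrite [X in _ * X](eq_bigr (fun j => f j * S i i)); last by move=> j hj; apply: hf.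
rewrite big_split /= prodr_const card_ge; last exact: ltnW.
by exists ((\prod_(j < N | (j < i)%N) S j j) * \prod_(j < N | ~~ (j < i)%N) f j); ring.
Qed.

Unset Implicit Arguments.
Theorem proposition2p5 (r : nat) (p : nat -> nat) (cov : cover_rel p) :
  is_differential_poset r cov ->
  (forall (n j : nat), (1 <= n)%N -> (1 <= j <= n)%N ->
     Delta_p p (n%:Z - j%:Z - (r == 1%N)%:Z) <= Delta_p p n%:Z) ->
  (forall n : nat,
     has_smith_form (map_mx polyC (DUmx cov n) + 'X%:M : 'M[{poly int}]_(p n))) ->
  forall n : nat, coker_free (Umx cov n).
Proof.
move=> hP ha hc n.
have mono := mono_p ha.
have r0 : (0 < r)%N by case: hP.
have [L [R0 [uL [uR hS]]]] := hc n.+1.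
set M := map_mx polyC (DUmx cov n.+1) + 'X%:M in hS.
set S := L *m M *m R0 in hS.
have hchi : \det M = \prod_(k < n.+2) ('X + ((r * k.+1)%N%:R)%:P) ^+ ex p (n.+1 - k).
  have := chi_formula hP mono n.+1 0; rewrite polyC0 addr0 => ->.
  by apply: eq_bigr => k _; rewrite add0r.
have hM : \det M = (\det L * \det R0)^-1 * \prod_i S i i.
  rewrite -smith_det // /S !det_mulmx mulrAC mulKr //.
  by rewrite unitrM -!unitmxE uL uR.
pose x0 : int := - (r%:Z).
have units : forall i : 'I_(p n.+1), (i < p n)%N -> (S i i).[x0] \is a GRing.unit.
  move=> i im; have [c hcs] := smith_split i hS.
  have E : (S i i) ^+ (p n.+1 - i) * ((\det L * \det R0)^-1 * c) =
           \prod_(k < n.+2) ('X + ((r * k.+1)%N%:R)%:P) ^+ ex p (n.+1 - k).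
    by rewrite -hchi hM hcs mulrCA.
  have ainj : injective (fun k : 'I_n.+2 => ((r * k.+1)%N%:R : int)).
    move=> k k' /eqP; rewrite eqr_nat eqn_mul2l (negbTE (lt0n_neq0 r0)) /=.
    by move=> /eqP [h]; apply: val_inj.
  have good : forall k : 'I_n.+2, (ex p n.+1 < ex p (n.+1 - k))%N ->
      x0 + (r * k.+1)%N%:R = 1.
    move=> k hk.
    have : ((r == 1%N) && ((k : nat) == 1%N)).
      apply: contraTT hk => h; rewrite -leqNgt; apply: (ex_le hP ha) => //.
      by rewrite -ltnS.
    by case/andP => /eqP r1 /eqP hk1; rewrite /x0 r1 hk1.
  have Dk : (ex p n.+1 < p n.+1 - i)%N.
    have := mono n; have := ltn_ord i; rewrite /ex; lia.
  by have [-> ->] := key_eval ainj good Dk E.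
pose ev := horner_eval x0.
pose L' := map_mx ev L; pose R' := map_mx ev R0; pose S' := map_mx ev S.
set U := Umx cov n; set D := Dmx cov n.
have hS' : S' = L' *m (U *m D) *m R'.
  rewrite /S' /S !map_mxM; congr (_ *m _ *m _).
  rewrite /M map_mxD (DUS hP) map_scalar_mx /= /ev horner_evalE hornerX.
  have -> : map_mx (horner_eval x0) (map_mx polyC (U *m D + (r%:R)%:M)) = U *m D + (r%:R)%:M.
    by apply/matrixP => a b; rewrite !mxE horner_evalE hornerC.
  by rewrite -addrA -raddfD /= /x0 natz subrr raddf0 addr0.
have uL' : L' \in unitmx by rewrite unitmxE det_map_mx rmorph_unit // -unitmxE.
have uR' : R' \in unitmx by rewrite unitmxE det_map_mx rmorph_unit // -unitmxE.
have S'diag : forall a b : 'I_(p n.+1), a != b -> S' a b = 0.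
  move=> a b ab; rewrite /S' mxE /ev; case: hS => hz _; rewrite hz //.
  by rewrite horner_evalE horner0.
have S'unit : forall a : 'I_(p n.+1), (a < p n)%N -> S' a a \is a GRing.unit.
  by move=> a am; rewrite /S' mxE /ev horner_evalE; apply: units.
clearbody S'.
have mN : (p n <= p n.+1)%N by apply: mono.
pose io := fun a : 'I_(p n) => widen_ord mN a.
pose W := L' *m U.
have hS'2 : S' = W *m (D *m R') by rewrite hS' /W !mulmxA.
have Bunit : colsub io (D *m R') \in unitmx.
  have h := mxsub_mul io io W (D *m R'); rewrite -hS'2 in h.
  have : \det (mxsub io io S') \is a GRing.unit.
    have -> : mxsub io io S' = diag_mx (\row_a S' (io a) (io a)).
      apply/matrixP => a b; rewrite [LHS]mxE [RHS]mxE [X in X *+ _]mxE.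
      case: (eqVneq a b) => [->|ne]; first by rewrite mulr1n.
      rewrite mulr0n S'diag //; apply: contra ne => /eqP h'.
    rewrite det_diag; apply/unitr_prod => a _; rewrite mxE; apply: S'unit.
    by rewrite /= ltn_ord.
  by rewrite h det_mulmx unitrM unitmxE => /andP[_ ->].
have Wrow : forall (j : 'I_(p n.+1)) c, (p n <= j)%N -> W j c = 0.
  move=> j c mj.
  have h0 : row j W *m colsub io (D *m R') = 0.
    rewrite mulmx_colsub -row_mul -hS'2; apply/matrixP => a b; rewrite !mxE.
    apply: S'diag; apply/negP => /eqP h'.
    have hj : (j : nat) = io b by rewrite h'.
    by move: mj; rewrite hj /= leqNgt ltn_ord.
  have := congr1 (fun X => X *m invmx (colsub io (D *m R'))) h0.
  by rewrite /= mulmxK // mul0mx => /matrixP /(_ 0 c); rewrite !mxE.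
have sig_lt : forall a : 'I_(p n.+1 - p n), (a + p n < p n.+1)%N.
  by move=> a; have := ltn_ord a; lia.
pose sg := fun a : 'I_(p n.+1 - p n) => Ordinal (sig_lt a).
have sg_inj : injective sg.
  by move=> a b /(congr1 val) /= /addIn h; apply: val_inj.
exists (p n.+1 - p n)%N, (rowsub sg L'); split.
  move=> w; exists (invmx L' *m colsub sg 1%:M *m w).
  rewrite !mulmxA mul_rowsub_mx mulmxV // -mxsub_mul mul1mx.
  have -> : mxsub sg sg (1%:M : 'M[int]_(p n.+1)) = 1%:M.
    by apply/matrixP => a b; rewrite !mxE (inj_eq sg_inj).
  by rewrite mul1mx.
have FU : rowsub sg L' *m U = 0.
  rewrite mul_rowsub_mx -/W; apply/matrixP => a c; rewrite mxE [RHS]mxE Wrow //=.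
  exact: leq_addl.
move=> v; split; last first.
  by move=> [u ->]; rewrite mulmxA FU mul0mx.
move=> Fv.
pose w := L' *m v.
have w0 : forall b : 'I_(p n.+1), (p n <= b)%N -> w b 0 = 0.
  move=> b nb.
  have lt : (b - p n < p n.+1 - p n)%N by have := ltn_ord b; lia.
  move: Fv; rewrite mul_rowsub_mx => /matrixP /(_ (Ordinal lt) 0).
  rewrite mxE [RHS]mxE => h; rewrite -[RHS]h.
  by rewrite /w; congr (_ _ _); apply: val_inj => /=; rewrite subnK.
have wE : w = L' *m v by [].
clearbody w.
pose x : 'cV[int]_(p n.+1) := \col_b (if (b < p n)%N then (S' b b)^-1 * w b 0 else 0).
have Sx : S' *m x = w.
  apply/matrixP => b z; rewrite (ord1 z) !mxE (bigD1 b) //= big1 ?addr0; last first.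
    by move=> c cb; rewrite S'diag ?mul0r // eq_sym.
  rewrite mxE; case: ifP => bm.
    by rewrite mulrA mulrV ?mul1r //; apply: S'unit; rewrite bm.
  by rewrite mulr0 w0 // leqNgt bm.
exists (D *m R' *m x).
rewrite -[LHS](mulKmx uL') -wE -Sx hS' !mulmxA.
by rewrite -[invmx L' *m L' *m U]mulmxA mulKmx.
Qed.
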